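(* Let $0<\delta<\frac12$, $n\ge1$, let $\mathbf{y}=(y_1,\dots,y_{n-1})\in D_n$ and $\varphi=(\varphi_1,\dots,\varphi_n)\in E_\delta^n$. Then there is a unique $\mathbf{x}=(x_1,\dots,x_{n-1})\in D_n$ for which there exists a function $\bar\varphi\in E_\delta$ whose restriction to $[x_{i-1},x_i]$ equals $(\varphi_i;[x_{i-1},x_i],[y_{i-1},y_i])$ for each $i$ with $1\le i\le n$ (with the conventions $x_0=y_0=0$, $x_n=y_n=1$).
   Context: $I=[0,1]$. $E_\delta=\mathrm{Diff}_+^{1,\delta}(I)$ is the set of $C^1$ diffeomorphisms $f$ of $I$ fixing $0$ and $1$ whose derivative $f'$ is Hölder continuous of exponent $\delta$; $E_\delta^n$ is its $n$-fold Cartesian product. $D_n=\{(x_1,\dots,x_{n-1}):0<x_1<\cdots<x_{n-1}<1\}$. For $\varphi\in E_\delta$ and closed intervals $J,K\subset\mathbb{R}$ with nonempty interior, where $J$ has left endpoint $x$ and length $j$ and $K$ has left endpoint $y$ and length $k$, the affine distortion $(\varphi;J,K):J\to K$ is $t\mapsto y+k\,\varphi\!\left(\frac{t-x}{j}\right)$. *)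

(* Defs.v *)
From Stdlib Require Import Reals Lra Lia Arith.
Open Scope R_scope.

Definition inI (x : R) : Prop := 0 <= x <= 1.

Definition deriv_on_I (f d : R -> R) : Prop :=
  forall x, inI x -> forall eps, 0 < eps -> exists del, 0 < del /\
    forall y, inI y -> y <> x -> Rabs (y - x) < del ->
      Rabs ((f y - f x) / (y - x) - d x) < eps.

Definition cont_on_I (g : R -> R) : Prop :=
  forall x, inI x -> forall eps, 0 < eps -> exists del, 0 < del /\
    forall y, inI y -> Rabs (y - x) < del -> Rabs (g y - g x) < eps.

Definition C1_on_I (f : R -> R) : Prop :=
  exists d, deriv_on_I f d /\ cont_on_I d.

(* C^1 diffeomorphism of I fixing 0 and 1 (hence orientation preserving):
   f maps I to I bijectively, with C^1 inverse g. *)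
Definition Diff1_plus (f : R -> R) : Prop :=
  f 0 = 0 /\ f 1 = 1 /\ C1_on_I f /\
  exists g : R -> R,
    (forall x, inI x -> inI (f x) /\ g (f x) = x) /\
    (forall y, inI y -> inI (g y) /\ f (g y) = y) /\
    C1_on_I g.

Definition E_delta (delta : R) (f : R -> R) : Prop :=
  Diff1_plus f /\
  exists d, deriv_on_I f d /\
    exists C : R, forall x y, inI x -> inI y -> x <> y ->
      Rabs (d x - d y) <= C * Rpower (Rabs (x - y)) delta.

(* A point (x_1,...,x_{n-1}) is encoded by x : nat -> R (only indices
   1..n-1 matter); ext n x adds the conventions x_0 = 0, x_n = 1. *)
Definition ext (n : nat) (x : nat -> R) (i : nat) : R :=
  if Nat.eqb i 0 then 0 else if Nat.eqb i n then 1 else x i.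

Definition inD (n : nat) (x : nat -> R) : Prop :=
  forall i, (i < n)%nat -> ext n x i < ext n x (S i).

(* Affine distortion (phi; J, K) with J = [xl, xl + j], K = [yl, yl + k]. *)
Definition aff_dist (phi : R -> R) (xl j yl k : R) (t : R) : R :=
  yl + k * phi ((t - xl) / j).

Definition glues (n : nat) (phi : nat -> R -> R) (x y : nat -> R)
  (phibar : R -> R) : Prop :=
  forall i, (1 <= i <= n)%nat ->
    forall t, ext n x (i - 1) <= t <= ext n x i ->
      phibar t = aff_dist (phi i) (ext n x (i - 1)) (ext n x i - ext n x (i - 1))
                          (ext n y (i - 1)) (ext n y i - ext n y (i - 1)) t.

(* Main.v *)
Require Import Defs.
From Stdlib Require Import Reals.
From Stdlib Require Import Lra Lia Arith.
From Stdlib Require Import IndefiniteDescription.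
Open Scope R_scope.

Lemma choice_nat (A : Type) (P : nat -> A -> Prop) :
  (forall i, exists a, P i a) -> exists f : nat -> A, forall i, P i (f i).
Proof.
  intros H. exists (fun i => proj1_sig (constructive_indefinite_description _ (H i))).
  intros i. exact (proj2_sig (constructive_indefinite_description _ (H i))).
Qed.

Lemma finite_min (N : nat) (P : nat -> R -> Prop) :
  (forall i e e', 0 < e' <= e -> P i e -> P i e') ->
  (forall i, (i <= N)%nat -> exists e, 0 < e /\ P i e) ->
  exists e, 0 < e /\ forall i, (i <= N)%nat -> P i e.
Proof.
  intros Hm. induction N as [|N IH]; intros H.
  - destruct (H 0%nat (le_n 0)) as [e [He HP]]. exists e; split; auto.
    intros i Hi. replace i with 0%nat by lia. auto.
  - destruct IH as [e1 [He1 HP1]]. { intros i Hi; apply H; lia. }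
    destruct (H (S N) (le_n _)) as [e2 [He2 HP2]].
    exists (Rmin e1 e2). split. { apply Rmin_glb_lt; auto. }
    intros i Hi. destruct (Nat.eq_dec i (S N)) as [->|Hne].
    + apply (Hm _ e2); auto. split. apply Rmin_glb_lt; auto. apply Rmin_r.
    + apply (Hm _ e1); [|apply HP1; lia]. split. apply Rmin_glb_lt; auto. apply Rmin_l.
Qed.

Lemma near_point (a b t d : R) : a < b -> a <= t <= b -> 0 < d ->
  exists y, a <= y <= b /\ y <> t /\ Rabs (y - t) < d.
Proof.
  intros Hab Ht Hd. destruct (Rlt_dec t b) as [Htb|Htb].
  - exists (t + Rmin d (b - t) / 2).
    assert (0 < Rmin d (b - t)) by (apply Rmin_glb_lt; lra).
    assert (Rmin d (b-t) <= d) by apply Rmin_l. assert (Rmin d (b-t) <= b - t) by apply Rmin_r.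
    split; [lra|]. split; [lra|]. rewrite Rabs_right; lra.
  - exists (t - Rmin d (b - a) / 2).
    assert (0 < Rmin d (b - a)) by (apply Rmin_glb_lt; lra).
    assert (Rmin d (b-a) <= d) by apply Rmin_l. assert (Rmin d (b-a) <= b - a) by apply Rmin_r.
    split; [lra|]. split; [lra|]. rewrite Rabs_left; lra.
Qed.

Lemma small_zero (z K : R) : (forall e, 0 < e <= 1 -> Rabs z <= e * K) -> z = 0.
Proof.
  intros H. destruct (Req_dec z 0) as [|Hz]; auto. exfalso.
  assert (HK : 0 < K). { specialize (H 1 ltac:(lra)). pose proof (Rabs_pos_lt z Hz). lra. }
  pose proof (Rabs_pos_lt z Hz).
  set (e := Rmin 1 (Rabs z / (2 * K))).
  assert (E0 : 0 < e) by (apply Rmin_glb_lt; [lra| apply Rdiv_lt_0_compat; lra]).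
  assert (E1 : e <= 1) by apply Rmin_l. assert (E2 : e <= Rabs z / (2*K)) by apply Rmin_r.
  specialize (H e ltac:(lra)).
  assert (e * K <= Rabs z / 2). { apply Rmult_le_compat_r with (r := K) in E2; [|lra].
    replace (Rabs z / (2 * K) * K) with (Rabs z / 2) in E2 by (field; lra). lra. }
  lra.
Qed.

Lemma deriv_unique (f d1 d2 : R -> R) : deriv_on_I f d1 -> deriv_on_I f d2 ->
  forall x, inI x -> d1 x = d2 x.
Proof.
  intros H1 H2 x Hx. apply Rminus_diag_uniq. apply (small_zero _ 2). intros e He.
  destruct (H1 x Hx e ltac:(lra)) as [a [Ha Ha']].
  destruct (H2 x Hx e ltac:(lra)) as [b [Hb Hb']].
  destruct (near_point 0 1 x (Rmin a b) ltac:(lra) Hx) as [y [Hy [Hyx Hyd]]].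
  { apply Rmin_glb_lt; auto. }
  assert (Rmin a b <= a) by apply Rmin_l. assert (Rmin a b <= b) by apply Rmin_r.
  specialize (Ha' y Hy Hyx ltac:(lra)). specialize (Hb' y Hy Hyx ltac:(lra)).
  set (Q := (f y - f x) / (y - x)) in *.
  replace (d1 x - d2 x) with ((Q - d2 x) - (Q - d1 x)) by ring.
  eapply Rle_trans. apply Rabs_triang. rewrite Rabs_Ropp. lra.
Qed.

Lemma Rpower_le_base (a b c : R) : 0 <= c -> 0 < a <= b -> Rpower a c <= Rpower b c.
Proof.
  intros Hc [Ha Hab]. unfold Rpower. destruct (Req_dec a b) as [->|Hne]; [lra|].
  destruct (Req_dec c 0) as [->|Hc0]. { rewrite !Rmult_0_l. lra. }
  left. apply exp_increasing. apply Rmult_lt_compat_l; [lra|]. apply ln_increasing; lra.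
Qed.

Definition incr (n : nat) (p : nat -> R) := forall i, (i < n)%nat -> p i < p (S i).
Definition inP (p : nat -> R) (m : nat) (t : R) := p (m - 1)%nat <= t <= p m.

Fixpoint sel_from (p : nat -> R) (G : nat -> R -> R) (i fuel : nat) (t : R) : R :=
  match fuel with
  | O => G i t
  | S f => if Rle_dec t (p i) then G i t else sel_from p G (S i) f t
  end.
Definition selF (n : nat) (p : nat -> R) (G : nat -> R -> R) (t : R) : R :=
  sel_from p G 1 (n - 1) t.

Definition piece (p q : nat -> R) (h : nat -> R -> R) (m : nat) (t : R) : R :=
  aff_dist (h m) (p (m - 1)%nat) (p m - p (m - 1)%nat) (q (m - 1)%nat) (q m - q (m - 1)%nat) t.
Definition dpiece (p q : nat -> R) (Dh : nat -> R -> R) (m : nat) (t : R) : R :=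
  (q m - q (m - 1)%nat) / (p m - p (m - 1)%nat) * Dh m ((t - p (m - 1)%nat) / (p m - p (m - 1)%nat)).

Lemma incr_lt n p : incr n p -> forall i j, (i < j <= n)%nat -> p i < p j.
Proof.
  intros H i j. induction j as [|j IH]; intros Hij; [lia|].
  destruct (Nat.eq_dec i j) as [->|Hne]. apply H; lia.
  apply Rlt_trans with (p j). apply IH; lia. apply H; lia.
Qed.

Lemma incr_le n p : incr n p -> forall i j, (i <= j <= n)%nat -> p i <= p j.
Proof.
  intros H i j Hij. destruct (Nat.eq_dec i j) as [->|]; [lra|]. left; apply (incr_lt n); auto; lia.
Qed.

Lemma sel_spec n p G m t : incr n p -> (1 <= m <= n)%nat -> inP p m t ->
  (forall i, (1 <= i < n)%nat -> G i (p i) = G (S i) (p i)) ->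
  selF n p G t = G m t.
Proof.
  intros Hp Hm Ht HG. unfold selF.
  assert (forall fuel i, (i + fuel = n)%nat -> (1 <= i <= m)%nat -> sel_from p G i fuel t = G m t).
  { induction fuel as [|f IH]; intros i Hi Him; simpl.
    - replace m with i by lia. reflexivity.
    - unfold inP in Ht. destruct (Rle_dec t (p i)) as [Hti|Hti].
      + destruct (Nat.eq_dec i m) as [->|Hne]; [reflexivity|].
        destruct (Nat.eq_dec (m - 1) i) as [He|He].
        * assert (t = p i). { rewrite He in Ht. lra. }
          subst t. rewrite HG by lia. replace (S i) with m by lia. reflexivity.
        * assert (p i < p (m-1)%nat) by (apply (incr_lt n); auto; lia). lra.
      + apply IH; [lia|]. split; [lia|].
        destruct (Nat.eq_dec i m) as [->|]; [lra|lia]. }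
  apply H; lia.
Qed.

Lemma cover n p t : incr n p -> p 0%nat = 0 -> p n = 1 -> (1 <= n)%nat -> inI t ->
  exists m, (1 <= m <= n)%nat /\ inP p m t.
Proof.
  intros Hp H0 H1 Hn Ht. unfold inI, inP in *.
  assert (forall k, (1 <= k <= n)%nat -> t <= p k -> exists m, (1 <= m <= k)%nat /\ p (m-1)%nat <= t <= p m).
  { induction k as [|k IH]; intros Hk Htk; [lia|].
    destruct (Nat.eq_dec k 0) as [->|Hk0].
    - exists 1%nat. simpl. split; [lia|]. lra.
    - destruct (Rle_dec t (p k)) as [Hl|Hl].
      + destruct (IH ltac:(lia) Hl) as [m [Hm1 Hm2]]. exists m; split; [lia|auto].
      + exists (S k). simpl. rewrite Nat.sub_0_r. split; [lia|lra]. }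
  destruct (H n ltac:(lia) ltac:(lra)) as [m Hm]. exists m; auto.
Qed.

Lemma near n p t : incr n p -> p 0%nat = 0 -> p n = 1 -> (1 <= n)%nat -> inI t ->
  exists d0, 0 < d0 /\ forall y, inI y -> Rabs (y - t) < d0 ->
    exists m, (1 <= m <= n)%nat /\ inP p m t /\ inP p m y.
Proof.
  intros Hp H0 H1 Hn Ht.
  destruct (finite_min n (fun i e => p i <> t -> e <= Rabs (t - p i))) as [d0 [Hd0 Hd]].
  { intros i e e' He HP Hne. specialize (HP Hne). lra. }
  { intros i Hi. destruct (Req_dec (p i) t) as [E|E].
    - exists 1. split; [lra|]. tauto.
    - exists (Rabs (t - p i)). split; [|lra]. apply Rabs_pos_lt. lra. }
  exists d0. split; auto. intros y Hy Hyt.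
  destruct (cover n p y Hp H0 H1 Hn Hy) as [m [Hm Hym]].
  exists m. split; auto. split; auto. unfold inP in *.
  destruct (Rle_dec (p (m-1)%nat) t) as [Ha|Ha]; destruct (Rle_dec t (p m)) as [Hb|Hb].
  - lra.
  - exfalso. specialize (Hd m ltac:(lia) ltac:(lra)).
    rewrite Rabs_right in Hd by lra. rewrite Rabs_left in Hyt by lra. lra.
  - exfalso. specialize (Hd (m-1)%nat ltac:(lia) ltac:(lra)).
    rewrite Rabs_left in Hd by lra. rewrite Rabs_right in Hyt by lra. lra.
  - exfalso. assert (p (m-1)%nat <= p m) by (apply (incr_le n); auto; lia). lra.
Qed.

Lemma scaled_inI a j t : 0 < j -> a <= t <= a + j -> inI ((t - a) / j).
Proof.
  intros Hj Ht. unfold inI. split.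
  - apply Rmult_le_pos; [lra|]. left; apply Rinv_0_lt_compat; lra.
  - apply Rmult_le_reg_r with j; [lra|]. unfold Rdiv. rewrite Rmult_assoc, Rinv_l; lra.
Qed.

Lemma abs_scaled a j y t : 0 < j -> Rabs ((y - a) / j - (t - a) / j) = Rabs (y - t) / j.
Proof.
  intros Hj. replace ((y - a) / j - (t - a) / j) with ((y - t) / j) by (field; lra).
  unfold Rdiv. rewrite Rabs_mult, Rabs_inv, (Rabs_right j); lra.
Qed.

Lemma piece_deriv p q h Dh m t : p (m - 1)%nat < p m -> deriv_on_I (h m) (Dh m) -> inP p m t ->
  forall eps, 0 < eps -> exists del, 0 < del /\ forall y, inP p m y -> y <> t -> Rabs (y - t) < del ->
   Rabs ((piece p q h m y - piece p q h m t) / (y - t) - dpiece p q Dh m t) < eps.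
Proof.
  intros Hj Hd Ht eps Heps. unfold piece, dpiece, aff_dist, inP in *.
  set (a := p (m-1)%nat) in *. set (j := p m - a).
  set (k := q m - q (m-1)%nat). set (c := k / j).
  assert (Hj' : 0 < j) by (unfold j; lra).
  assert (Hs : inI ((t - a) / j)) by (apply scaled_inI; unfold j; lra).
  assert (Hc : 0 < Rabs c + 1) by (pose proof (Rabs_pos c); lra).
  destruct (Hd _ Hs (eps / (Rabs c + 1)) ltac:(apply Rdiv_lt_0_compat; lra)) as [d [Hd0 Hd']].
  exists (j * d). split. apply Rmult_lt_0_compat; lra.
  intros y Hy Hyt Hyd.
  assert (Hsy : inI ((y - a) / j)) by (apply scaled_inI; unfold j; lra).
  assert (Hne : (y - a) / j <> (t - a) / j).
  { intro E. apply Hyt. replace y with (a + j * ((y - a) / j)) by (field; lra).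
    rewrite E. field; lra. }
  assert (Hdist : Rabs ((y - a) / j - (t - a) / j) < d).
  { rewrite abs_scaled by lra. apply Rmult_lt_reg_r with j; [lra|].
    unfold Rdiv. rewrite Rmult_assoc, Rinv_l by lra. lra. }
  specialize (Hd' _ Hsy Hne Hdist).
  set (Q := (h m ((y - a) / j) - h m ((t - a) / j)) / ((y - a) / j - (t - a) / j)) in *.
  replace ((q (m - 1)%nat + k * h m ((y - a) / j) - (q (m - 1)%nat + k * h m ((t - a) / j))) / (y - t)
     - c * Dh m ((t - a) / j)) with (c * (Q - Dh m ((t - a) / j))).
  2:{ unfold Q, c. field. split; lra. }
  rewrite Rabs_mult.
  apply Rle_lt_trans with (Rabs c * (eps / (Rabs c + 1))).
  { apply Rmult_le_compat_l. apply Rabs_pos. lra. }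
  apply Rmult_lt_reg_r with (Rabs c + 1); [lra|].
  replace (Rabs c * (eps / (Rabs c + 1)) * (Rabs c + 1)) with (Rabs c * eps) by (field; lra).
  pose proof (Rabs_pos c). nra.
Qed.

Lemma dpiece_cont p q Dh m t : p (m - 1)%nat < p m -> cont_on_I (Dh m) -> inP p m t ->
  forall eps, 0 < eps -> exists del, 0 < del /\ forall y, inP p m y -> Rabs (y - t) < del ->
   Rabs (dpiece p q Dh m y - dpiece p q Dh m t) < eps.
Proof.
  intros Hj Hd Ht eps Heps. unfold dpiece, inP in *.
  set (a := p (m-1)%nat) in *. set (j := p m - a).
  set (k := q m - q (m-1)%nat). set (c := k / j).
  assert (Hj' : 0 < j) by (unfold j; lra).
  assert (Hs : inI ((t - a) / j)) by (apply scaled_inI; unfold j; lra).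
  assert (Hc : 0 < Rabs c + 1) by (pose proof (Rabs_pos c); lra).
  destruct (Hd _ Hs (eps / (Rabs c + 1)) ltac:(apply Rdiv_lt_0_compat; lra)) as [d [Hd0 Hd']].
  exists (j * d). split. apply Rmult_lt_0_compat; lra.
  intros y Hy Hyd.
  assert (Hsy : inI ((y - a) / j)) by (apply scaled_inI; unfold j; lra).
  assert (Hdist : Rabs ((y - a) / j - (t - a) / j) < d).
  { rewrite abs_scaled by lra. apply Rmult_lt_reg_r with j; [lra|].
    unfold Rdiv. rewrite Rmult_assoc, Rinv_l by lra. lra. }
  specialize (Hd' _ Hsy Hdist).
  replace (c * Dh m ((y - a) / j) - c * Dh m ((t - a) / j))
    with (c * (Dh m ((y - a) / j) - Dh m ((t - a) / j))) by (unfold c; ring).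
  rewrite Rabs_mult.
  apply Rle_lt_trans with (Rabs c * (eps / (Rabs c + 1))).
  { apply Rmult_le_compat_l. apply Rabs_pos. lra. }
  apply Rmult_lt_reg_r with (Rabs c + 1); [lra|].
  replace (Rabs c * (eps / (Rabs c + 1)) * (Rabs c + 1)) with (Rabs c * eps) by (field; lra).
  pose proof (Rabs_pos c). nra.
Qed.

Lemma piece_right p q h m : p (m - 1)%nat < p m -> h m 1 = 1 -> piece p q h m (p m) = q m.
Proof.
  intros Hj H1. unfold piece, aff_dist.
  replace ((p m - p (m - 1)%nat) / (p m - p (m - 1)%nat)) with 1 by (field; lra).
  rewrite H1. ring.
Qed.

Lemma piece_left p q h m : p (m - 1)%nat < p m -> h m 0 = 0 -> piece p q h m (p (m-1)%nat) = q (m-1)%nat.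
Proof.
  intros Hj H0. unfold piece, aff_dist.
  replace ((p (m-1)%nat - p (m - 1)%nat) / (p m - p (m - 1)%nat)) with 0 by (field; lra).
  rewrite H0. ring.
Qed.

Lemma piece_match n p q h : incr n p ->
  (forall m, (1 <= m <= n)%nat -> h m 0 = 0 /\ h m 1 = 1) ->
  forall i, (1 <= i < n)%nat -> piece p q h i (p i) = piece p q h (S i) (p i).
Proof.
  intros Hp Hh i Hi. rewrite piece_right.
  - pose proof (piece_left p q h (S i)) as L. replace (S i - 1)%nat with i in L by lia.
    rewrite L; auto. apply Hp; lia. apply Hh; lia.
  - replace i with (S (i-1)) at 2 by lia. apply Hp; lia.
  - apply Hh; lia.
Qed.

Lemma glue_C1 n p q h Dh : incr n p -> p 0%nat = 0 -> p n = 1 -> (1 <= n)%nat ->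
  (forall m, (1 <= m <= n)%nat -> h m 0 = 0 /\ h m 1 = 1 /\ deriv_on_I (h m) (Dh m) /\ cont_on_I (Dh m)) ->
  (forall i, (1 <= i < n)%nat -> dpiece p q Dh i (p i) = dpiece p q Dh (S i) (p i)) ->
  deriv_on_I (selF n p (piece p q h)) (selF n p (dpiece p q Dh)) /\
  cont_on_I (selF n p (dpiece p q Dh)).
Proof.
  intros Hp H0 H1 Hn Hh Hmatch.
  assert (Hpm : forall i, (1 <= i < n)%nat -> piece p q h i (p i) = piece p q h (S i) (p i)).
  { apply piece_match; auto. intros m Hm; split; apply Hh; auto. }
  assert (Hj : forall m, (1 <= m <= n)%nat -> p (m-1)%nat < p m).
  { intros m Hm. replace m with (S (m-1)) at 2 by lia. apply Hp; lia. }
  split.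
  - intros t Ht eps Heps.
    destruct (near n p t Hp H0 H1 Hn Ht) as [d0 [Hd0 Hnear]].
    destruct (finite_min n (fun m e => (1 <= m <= n)%nat -> inP p m t -> forall y, inP p m y -> y <> t ->
       Rabs (y - t) < e ->
       Rabs ((piece p q h m y - piece p q h m t) / (y - t) - dpiece p q Dh m t) < eps)) as [d1 [Hd1 Hall]].
    { intros i e e' He HP Hm Hi y Hy Hyt Hyd. apply HP; auto. lra. }
    { intros i Hi. destruct (le_lt_dec 1 i); [destruct (le_lt_dec i n)|].
      - destruct (Classical_Prop.classic (inP p i t)) as [HI|HI].
        + destruct (piece_deriv p q h Dh i t (Hj i ltac:(lia)) ltac:(apply Hh; lia) HI eps Heps)
            as [d [Hd Hd']]. exists d. split; auto.
        + exists 1. split; [lra|]. tauto.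
      - exists 1. split; [lra|]. intros; lia.
      - exists 1. split; [lra|]. intros; lia. }
    exists (Rmin d0 d1). split. apply Rmin_glb_lt; auto.
    intros y Hy Hyt Hyd.
    assert (Rmin d0 d1 <= d0) by apply Rmin_l. assert (Rmin d0 d1 <= d1) by apply Rmin_r.
    destruct (Hnear y Hy ltac:(lra)) as [m [Hm [Htm Hym]]].
    rewrite !(sel_spec n p (piece p q h) m) by auto.
    rewrite (sel_spec n p (dpiece p q Dh) m) by auto.
    apply (Hall m); auto. lia. lra.
  - intros t Ht eps Heps.
    destruct (near n p t Hp H0 H1 Hn Ht) as [d0 [Hd0 Hnear]].
    destruct (finite_min n (fun m e => (1 <= m <= n)%nat -> inP p m t -> forall y, inP p m y ->
       Rabs (y - t) < e ->
       Rabs (dpiece p q Dh m y - dpiece p q Dh m t) < eps)) as [d1 [Hd1 Hall]].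
    { intros i e e' He HP Hm Hi y Hy Hyd. apply HP; auto. lra. }
    { intros i Hi. destruct (le_lt_dec 1 i); [destruct (le_lt_dec i n)|].
      - destruct (Classical_Prop.classic (inP p i t)) as [HI|HI].
        + destruct (dpiece_cont p q Dh i t (Hj i ltac:(lia)) ltac:(apply Hh; lia) HI eps Heps)
            as [d [Hd Hd']]. exists d. split; auto.
        + exists 1. split; [lra|]. tauto.
      - exists 1. split; [lra|]. intros; lia.
      - exists 1. split; [lra|]. intros; lia. }
    exists (Rmin d0 d1). split. apply Rmin_glb_lt; auto.
    intros y Hy Hyd.
    assert (Rmin d0 d1 <= d0) by apply Rmin_l. assert (Rmin d0 d1 <= d1) by apply Rmin_r.
    destruct (Hnear y Hy ltac:(lra)) as [m [Hm [Htm Hym]]].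
    rewrite !(sel_spec n p (dpiece p q Dh) m) by auto.
    apply (Hall m); auto. lia. lra.
Qed.

Lemma inv_deriv f g Df Dg x : (forall x, inI x -> inI (f x) /\ g (f x) = x) ->
  deriv_on_I f Df -> deriv_on_I g Dg -> inI x -> Dg (f x) * Df x = 1.
Proof.
  intros Hfg Hf Hg Hx. apply Rminus_diag_uniq.
  set (A := Df x). set (B := Dg (f x)).
  apply (small_zero _ (Rabs B + Rabs A + 1)). intros e He.
  destruct (Hf x Hx e ltac:(lra)) as [df [Hdf Hdf']].
  destruct (Hf x Hx 1 ltac:(lra)) as [d1 [Hd1 Hd1']].
  destruct (Hfg x Hx) as [Hfx Hgfx].
  destruct (Hg (f x) Hfx e ltac:(lra)) as [dg [Hdg Hdg']].
  assert (HA : 0 < Rabs A + 1) by (pose proof (Rabs_pos A); lra).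
  set (d := Rmin df (Rmin d1 (dg / (Rabs A + 1)))).
  assert (Hd : 0 < d). { apply Rmin_glb_lt; auto. apply Rmin_glb_lt; auto. apply Rdiv_lt_0_compat; lra. }
  assert (d <= df) by apply Rmin_l.
  assert (d <= d1) by (eapply Rle_trans; [apply Rmin_r| apply Rmin_l]).
  assert (d <= dg / (Rabs A + 1)) by (eapply Rle_trans; [apply Rmin_r| apply Rmin_r]).
  destruct (near_point 0 1 x d ltac:(lra) Hx Hd) as [y [Hy [Hyx Hyd]]].
  specialize (Hdf' y Hy Hyx ltac:(lra)). specialize (Hd1' y Hy Hyx ltac:(lra)).
  destruct (Hfg y Hy) as [Hfy Hgfy].
  assert (Hyx' : y - x <> 0) by lra.
  change (Df x) with A in Hdf', Hd1'.
  set (Qf := (f y - f x) / (y - x)) in *.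
  assert (HQf : Rabs Qf <= Rabs A + 1).
  { replace Qf with ((Qf - A) + A) by ring. eapply Rle_trans. apply Rabs_triang. lra. }
  assert (Hne : f y <> f x). { intro E. apply Hyx. rewrite <- Hgfy, <- Hgfx, E. reflexivity. }
  assert (Hu : Rabs (f y - f x) < dg).
  { replace (f y - f x) with (Qf * (y - x)) by (unfold Qf; field; auto).
    rewrite Rabs_mult. apply Rle_lt_trans with ((Rabs A + 1) * Rabs (y - x)).
    apply Rmult_le_compat_r; auto. apply Rabs_pos.
    apply Rlt_le_trans with ((Rabs A + 1) * (dg / (Rabs A + 1))).
    apply Rmult_lt_compat_l; lra. right; field; lra. }
  specialize (Hdg' (f y) Hfy Hne Hu). rewrite Hgfy, Hgfx in Hdg'.
  change (Dg (f x)) with B in Hdg'.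
  set (Qg := (y - x) / (f y - f x)) in *.
  assert (HQ : Qg * Qf = 1). { unfold Qg, Qf. field. split; lra. }
  replace (B * A - 1) with (B * (A - Qf) + Qf * (B - Qg)) by (rewrite <- HQ; ring).
  eapply Rle_trans. apply Rabs_triang. rewrite !Rabs_mult.
  rewrite <- (Rabs_Ropp (A - Qf)), <- (Rabs_Ropp (B - Qg)).
  replace (- (A - Qf)) with (Qf - A) by ring. replace (- (B - Qg)) with (Qg - B) by ring.
  pose proof (Rabs_pos B). pose proof (Rabs_pos Qf). pose proof (Rabs_pos A).
  assert (Rabs B * Rabs (Qf - A) <= Rabs B * e) by (apply Rmult_le_compat_l; lra).
  assert (Rabs Qf * Rabs (Qg - B) <= (Rabs A + 1) * e) by (apply Rmult_le_compat; try lra; apply Rabs_pos).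
  lra.
Qed.

Lemma deriv_pos0 f Df : (forall x, inI x -> inI (f x)) -> f 0 = 0 -> deriv_on_I f Df -> Df 0 <> 0 -> 0 < Df 0.
Proof.
  intros Hf H0 Hd Hne. destruct (Rlt_le_dec 0 (Df 0)) as [|Hle]; auto. exfalso.
  assert (Hlt : Df 0 < 0) by lra.
  destruct (Hd 0 ltac:(unfold inI; lra) (- Df 0) ltac:(lra)) as [d [Hd0 Hd']].
  set (y := Rmin (d/2) (1/2)).
  assert (0 < y) by (apply Rmin_glb_lt; lra). assert (y <= d/2) by apply Rmin_l. assert (y <= 1/2) by apply Rmin_r.
  specialize (Hd' y ltac:(unfold inI; lra) ltac:(lra) ltac:(rewrite Rabs_right; lra)).
  rewrite H0 in Hd'. apply Rabs_def2 in Hd'. destruct Hd' as [Ha Hb].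
  assert ((f y - 0) / (y - 0) < 0) by lra.
  assert (f y < 0). { replace (f y) with ((f y - 0) / (y - 0) * y) by (field; lra). nra. }
  destruct (Hf y ltac:(unfold inI; lra)). lra.
Qed.

Lemma deriv_pos1 f Df : (forall x, inI x -> inI (f x)) -> f 1 = 1 -> deriv_on_I f Df -> Df 1 <> 0 -> 0 < Df 1.
Proof.
  intros Hf H1 Hd Hne. destruct (Rlt_le_dec 0 (Df 1)) as [|Hle]; auto. exfalso.
  assert (Hlt : Df 1 < 0) by lra.
  destruct (Hd 1 ltac:(unfold inI; lra) (- Df 1) ltac:(lra)) as [d [Hd0 Hd']].
  set (z := Rmin (d/2) (1/2)).
  assert (0 < z) by (apply Rmin_glb_lt; lra). assert (z <= d/2) by apply Rmin_l. assert (z <= 1/2) by apply Rmin_r.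
  specialize (Hd' (1 - z) ltac:(unfold inI; lra) ltac:(lra) ltac:(rewrite Rabs_left; lra)).
  rewrite H1 in Hd'. apply Rabs_def2 in Hd'. destruct Hd' as [Ha Hb].
  assert ((f (1 - z) - 1) / (1 - z - 1) < 0) by lra.
  assert (f (1 - z) > 1).
  { replace (f (1 - z)) with (1 + (f (1 - z) - 1) / (1 - z - 1) * (- z)) by (field; lra). nra. }
  destruct (Hf (1 - z) ltac:(unfold inI; lra)). lra.
Qed.

Definition Good (delta : R) (f D g Dg : R -> R) (C : R) : Prop :=
  f 0 = 0 /\ f 1 = 1 /\ deriv_on_I f D /\ cont_on_I D /\
  (forall x, inI x -> inI (f x) /\ g (f x) = x) /\
  (forall y, inI y -> inI (g y) /\ f (g y) = y) /\
  deriv_on_I g Dg /\ cont_on_I Dg /\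
  (forall x y, inI x -> inI y -> x <> y -> Rabs (D x - D y) <= C * Rpower (Rabs (x - y)) delta) /\
  0 <= C.

Lemma E_Good delta f : E_delta delta f -> exists D g Dg C, Good delta f D g Dg C.
Proof.
  intros [[H0 [H1 [[D [HD HDc]] [g [Hfg [Hgf [Dg [HDg HDgc]]]]]]]] [d [Hd [C HC]]]].
  exists D, g, Dg, (Rmax C 0). unfold Good.
  refine (conj H0 (conj H1 (conj HD (conj HDc (conj Hfg (conj Hgf (conj HDg (conj HDgc (conj _ _))))))))).
  - intros x y Hx Hy Hxy. rewrite <- (deriv_unique f d D Hd HD x Hx), <- (deriv_unique f d D Hd HD y Hy).
    eapply Rle_trans. apply HC; auto. apply Rmult_le_compat_r. unfold Rpower. left; apply exp_pos.
    apply Rmax_l.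
  - apply Rmax_r.
Qed.

Lemma Good_E delta f D g Dg C : Good delta f D g Dg C -> E_delta delta f.
Proof.
  intros [H0 [H1 [HD [HDc [Hfg [Hgf [HDg [HDgc [HC _]]]]]]]]].
  split. split; auto. split; auto. split. exists D; auto. exists g. split; auto. split; auto. exists Dg; auto.
  exists D. split; auto. exists C. auto.
Qed.

Lemma Good_props delta f D g Dg C : Good delta f D g Dg C ->
  0 < D 0 /\ 0 < D 1 /\ Dg 0 * D 0 = 1 /\ Dg 1 * D 1 = 1 /\ g 0 = 0 /\ g 1 = 1.
Proof.
  intros [H0 [H1 [HD [HDc [Hfg [Hgf [HDg [HDgc [HC _]]]]]]]]].
  assert (I0 : inI 0) by (unfold inI; lra). assert (I1 : inI 1) by (unfold inI; lra).
  pose proof (inv_deriv f g D Dg 0 Hfg HD HDg I0) as E0. rewrite H0 in E0.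
  pose proof (inv_deriv f g D Dg 1 Hfg HD HDg I1) as E1. rewrite H1 in E1.
  assert (Hf : forall x, inI x -> inI (f x)) by (intros; apply Hfg; auto).
  split. apply deriv_pos0 with f; auto. intro E; rewrite E in E0; lra.
  split. apply deriv_pos1 with f; auto. intro E; rewrite E in E1; lra.
  split; auto. split; auto. split.
  - destruct (Hfg 0 I0) as [_ E]. rewrite H0 in E; auto.
  - destruct (Hfg 1 I1) as [_ E]. rewrite H1 in E; auto.
Qed.

Lemma finite_max (N : nat) (f : nat -> R) : exists M, 0 <= M /\ forall i, (i <= N)%nat -> f i <= M.
Proof.
  induction N as [|N [M [HM H]]].
  - exists (Rmax (f 0%nat) 0). split. apply Rmax_r. intros i Hi. replace i with 0%nat by lia. apply Rmax_l.
  - exists (Rmax M (f (S N))). split. eapply Rle_trans; [apply HM| apply Rmax_l].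
    intros i Hi. destruct (Nat.eq_dec i (S N)) as [->|]. apply Rmax_r.
    eapply Rle_trans; [apply H; lia| apply Rmax_l].
Qed.

Lemma Rpower_nonneg a c : 0 <= Rpower a c.
Proof. unfold Rpower. left; apply exp_pos. Qed.

Lemma chain n p (Dbar : R -> R) K delta : incr n p -> 0 <= K -> 0 <= delta ->
  (forall m t t', (1 <= m <= n)%nat -> inP p m t -> inP p m t' -> t <> t' ->
     Rabs (Dbar t - Dbar t') <= K * Rpower (Rabs (t - t')) delta) ->
  forall m t, (1 <= m <= n)%nat -> inP p m t -> forall m' t', (m <= m' <= n)%nat -> inP p m' t' -> t < t' ->
     Rabs (Dbar t - Dbar t') <= INR m' * K * Rpower (t' - t) delta.
Proof.
  intros Hp HK Hd Hpc m t Hm Ht m'. induction m' as [|m'' IH]; intros t' Hm' Ht' Htt'; [lia|].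
  assert (HR : forall a, 0 <= K * Rpower a delta) by (intros; apply Rmult_le_pos; auto; apply Rpower_nonneg).
  assert (HI : 1 <= INR (S m'')). { rewrite S_INR. pose proof (pos_INR m''). lra. }
  assert (Hab : Rabs (t - t') = t' - t) by (rewrite Rabs_left; lra).
  destruct (Nat.eq_dec m (S m'')) as [E|Hne].
  - subst m. eapply Rle_trans. apply (Hpc (S m'')); auto. intro; lra. rewrite Hab.
    specialize (HR (t' - t)). rewrite Rmult_assoc. nra.
  - unfold inP in *. replace (S m'' - 1)%nat with m'' in Ht' by lia.
    remember (p m'') as P eqn:EP.
    assert (HtP : t <= P) by (assert (p m <= P) by (rewrite EP; apply (incr_le n); auto; lia); lra).
    assert (HPs : P <= p (S m'')) by (rewrite EP; left; apply Hp; lia).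
    destruct (Req_dec t P) as [E|E].
    + eapply Rle_trans. apply (Hpc (S m'')); try lia; try (intro; lra); unfold inP;
        replace (S m'' - 1)%nat with m'' by lia; lra.
      rewrite Hab. specialize (HR (t' - t)). rewrite Rmult_assoc. nra.
    + destruct (Req_dec t' P) as [E'|E'].
      * eapply Rle_trans. apply IH; try lia; auto. split; [|lra].
        rewrite E', EP. destruct m''. lia. replace (S m'' - 1)%nat with m'' by lia. left; apply Hp; lia.
        rewrite S_INR. specialize (HR (t' - t)). rewrite !Rmult_assoc. nra.
      * assert (H1 : Rabs (Dbar t - Dbar P) <= INR m'' * K * Rpower (P - t) delta).
        { apply IH; try lia; auto. split; [|lra]. rewrite EP. destruct m''. lia.
          replace (S m'' - 1)%nat with m'' by lia. left; apply Hp; lia. lra. }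
        assert (H2 : Rabs (Dbar P - Dbar t') <= K * Rpower (t' - P) delta).
        { replace (t' - P) with (Rabs (P - t')) by (rewrite Rabs_left; lra).
          apply (Hpc (S m'')); try lia; try (intro; lra); unfold inP; replace (S m'' - 1)%nat with m'' by lia; lra. }
        assert (M1 : Rpower (P - t) delta <= Rpower (t' - t) delta) by (apply Rpower_le_base; lra).
        assert (M2 : Rpower (t' - P) delta <= Rpower (t' - t) delta) by (apply Rpower_le_base; lra).
        replace (Dbar t - Dbar t') with ((Dbar t - Dbar P) + (Dbar P - Dbar t')) by ring.
        eapply Rle_trans. apply Rabs_triang. rewrite S_INR.
        pose proof (pos_INR m'').
        assert (INR m'' * K * Rpower (P - t) delta <= INR m'' * K * Rpower (t' - t) delta).
        { apply Rmult_le_compat_l; auto. apply Rmult_le_pos; auto. }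
        assert (K * Rpower (t' - P) delta <= K * Rpower (t' - t) delta) by (apply Rmult_le_compat_l; auto).
        lra.
Qed.

Lemma holder_glue n p (Dbar : R -> R) K delta : incr n p -> p 0%nat = 0 -> p n = 1 -> (1 <= n)%nat ->
  0 <= K -> 0 <= delta ->
  (forall m t t', (1 <= m <= n)%nat -> inP p m t -> inP p m t' -> t <> t' ->
     Rabs (Dbar t - Dbar t') <= K * Rpower (Rabs (t - t')) delta) ->
  forall x y, inI x -> inI y -> x <> y -> Rabs (Dbar x - Dbar y) <= (INR n * K) * Rpower (Rabs (x - y)) delta.
Proof.
  intros Hp H0 H1 Hn HK Hd Hpc.
  assert (W : forall x y, inI x -> inI y -> x < y -> Rabs (Dbar x - Dbar y) <= (INR n * K) * Rpower (Rabs (x - y)) delta).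
  { intros x y Hx Hy Hxy.
    destruct (cover n p x Hp H0 H1 Hn Hx) as [m [Hm Hxm]].
    destruct (cover n p y Hp H0 H1 Hn Hy) as [m' [Hm' Hym]].
    assert (Hmm : (m <= m')%nat).
    { destruct (le_lt_dec m m'); auto. exfalso. unfold inP in *.
      assert (p m' <= p (m-1)%nat) by (apply (incr_le n); auto; lia). lra. }
    eapply Rle_trans. apply (chain n p Dbar K delta Hp HK Hd Hpc m x Hm Hxm m' y); auto; lia.
    rewrite (Rabs_left (x - y)) by lra. replace (- (x - y)) with (y - x) by ring.
    apply Rmult_le_compat_r. apply Rpower_nonneg. apply Rmult_le_compat_r; auto. apply le_INR; lia. }
  intros x y Hx Hy Hxy. destruct (Rlt_dec x y). apply W; auto.
  rewrite Rabs_minus_sym, (Rabs_minus_sym x y). apply W; auto. lra.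
Qed.

Definition Kpiece (p q : nat -> R) (C : nat -> R) (delta : R) (m : nat) : R :=
  (q m - q (m-1)%nat) / (p m - p (m-1)%nat) * C m * Rpower (/ (p m - p (m-1)%nat)) delta.

Lemma piece_hol p q Dh C delta m t t' : p (m-1)%nat < p m -> q (m-1)%nat <= q m -> 0 <= C m ->
  (forall x y, inI x -> inI y -> x <> y -> Rabs (Dh m x - Dh m y) <= C m * Rpower (Rabs (x - y)) delta) ->
  inP p m t -> inP p m t' -> t <> t' ->
  Rabs (dpiece p q Dh m t - dpiece p q Dh m t') <= Kpiece p q C delta m * Rpower (Rabs (t - t')) delta.
Proof.
  intros Hj Hk HC HH Ht Ht' Htt. unfold dpiece, Kpiece, inP in *.
  set (a := p (m-1)%nat) in *. set (j := p m - a).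
  set (k := q m - q (m-1)%nat) in *.
  assert (Hj' : 0 < j) by (unfold j; lra). assert (Hk' : 0 <= k) by (unfold k; lra).
  assert (Hs : inI ((t - a) / j)) by (apply scaled_inI; unfold j; lra).
  assert (Hs' : inI ((t' - a) / j)) by (apply scaled_inI; unfold j; lra).
  assert (Hne : (t - a) / j <> (t' - a) / j).
  { intro E. apply Htt. replace t with (a + j * ((t - a) / j)) by (field; lra).
    rewrite E. field; lra. }
  specialize (HH _ _ Hs Hs' Hne). rewrite abs_scaled in HH by lra.
  assert (Hpos : 0 < Rabs (t - t')) by (apply Rabs_pos_lt; lra).
  replace (Rabs (t - t') / j) with (Rabs (t - t') * / j) in HH by reflexivity.
  rewrite <- Rpower_mult_distr in HH; [|lra| apply Rinv_0_lt_compat; lra].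
  replace (k / j * Dh m ((t - a) / j) - k / j * Dh m ((t' - a) / j))
    with (k / j * (Dh m ((t - a) / j) - Dh m ((t' - a) / j))) by ring.
  rewrite Rabs_mult. rewrite (Rabs_right (k / j)).
  2:{ apply Rle_ge. apply Rmult_le_pos; auto. left; apply Rinv_0_lt_compat; lra. }
  assert (0 <= k / j) by (apply Rmult_le_pos; auto; left; apply Rinv_0_lt_compat; lra).
  eapply Rle_trans. apply Rmult_le_compat_l. auto. apply HH. right; ring.
Qed.

Lemma glue_inv n p q h g : incr n p -> incr n q -> p 0%nat = 0 -> p n = 1 -> q 0%nat = 0 -> q n = 1 ->
  (1 <= n)%nat ->
  (forall m, (1 <= m <= n)%nat -> h m 0 = 0 /\ h m 1 = 1 /\ g m 0 = 0 /\ g m 1 = 1 /\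
      forall s, inI s -> inI (h m s) /\ g m (h m s) = s) ->
  forall t, inI t -> inI (selF n p (piece p q h) t) /\
     selF n q (piece q p g) (selF n p (piece p q h) t) = t.
Proof.
  intros Hp Hq Hp0 Hp1 Hq0 Hq1 Hn Hh t Ht.
  destruct (cover n p t Hp Hp0 Hp1 Hn Ht) as [m [Hm Htm]].
  assert (Hpm : forall i, (1 <= i < n)%nat -> piece p q h i (p i) = piece p q h (S i) (p i)).
  { apply piece_match; auto. intros m' Hm'; split; apply Hh; auto. }
  assert (Hqm : forall i, (1 <= i < n)%nat -> piece q p g i (q i) = piece q p g (S i) (q i)).
  { apply piece_match; auto. intros m' Hm'; split; apply Hh; auto. }
  rewrite (sel_spec n p _ m) by auto.
  assert (Hj : p (m-1)%nat < p m) by (replace m with (S (m-1)) at 2 by lia; apply Hp; lia).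
  assert (Hk : q (m-1)%nat < q m) by (replace m with (S (m-1)) at 2 by lia; apply Hq; lia).
  unfold inP in Htm.
  set (s := (t - p (m-1)%nat) / (p m - p (m-1)%nat)).
  assert (Hs : inI s) by (apply scaled_inI; lra).
  destruct (Hh m Hm) as [_ [_ [_ [_ Hhg]]]]. destruct (Hhg s Hs) as [Hhs Hghs].
  assert (Hv : q (m - 1)%nat <= piece p q h m t <= q m).
  { unfold piece, aff_dist. fold s. destruct Hhs. split; nra. }
  assert (Hq0' : 0 <= q (m-1)%nat) by (rewrite <- Hq0; apply (incr_le n); auto; lia).
  assert (Hq1' : q m <= 1) by (rewrite <- Hq1; apply (incr_le n); auto; lia).
  split. unfold inI; lra.
  rewrite (sel_spec n q _ m) by (auto; unfold inP; lra).
  unfold piece at 1, aff_dist.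
  replace ((piece p q h m t - q (m - 1)%nat) / (q m - q (m - 1)%nat)) with (h m s).
  2:{ unfold piece, aff_dist. fold s. field. lra. }
  rewrite Hghs. unfold s. field. lra.
Qed.

Lemma glue_E delta n p q h Dh g Dg C : 0 < delta -> incr n p -> incr n q ->
  p 0%nat = 0 -> p n = 1 -> q 0%nat = 0 -> q n = 1 -> (1 <= n)%nat ->
  (forall m, (1 <= m <= n)%nat -> Good delta (h m) (Dh m) (g m) (Dg m) (C m)) ->
  (forall i, (1 <= i < n)%nat -> dpiece p q Dh i (p i) = dpiece p q Dh (S i) (p i)) ->
  (forall i, (1 <= i < n)%nat -> dpiece q p Dg i (q i) = dpiece q p Dg (S i) (q i)) ->
  E_delta delta (selF n p (piece p q h)).
Proof.
  intros Hdel Hp Hq Hp0 Hp1 Hq0 Hq1 Hn HG Hm1 Hm2.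
  assert (HGp : forall m, (1 <= m <= n)%nat -> 0 < Dh m 0 /\ 0 < Dh m 1 /\ Dg m 0 * Dh m 0 = 1 /\
     Dg m 1 * Dh m 1 = 1 /\ g m 0 = 0 /\ g m 1 = 1) by (intros m Hm; eapply Good_props; apply HG; auto).
  assert (Hjp : forall m, (1 <= m <= n)%nat -> p (m-1)%nat < p m)
    by (intros m Hm; replace m with (S (m-1)) at 2 by lia; apply Hp; lia).
  assert (Hjq : forall m, (1 <= m <= n)%nat -> q (m-1)%nat < q m)
    by (intros m Hm; replace m with (S (m-1)) at 2 by lia; apply Hq; lia).
  assert (Hpm : forall i, (1 <= i < n)%nat -> piece p q h i (p i) = piece p q h (S i) (p i)).
  { apply piece_match; auto. intros m Hm; destruct (HG m Hm) as [A [B _]]; auto. }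
  destruct (glue_C1 n p q h Dh Hp Hp0 Hp1 Hn) as [HC1 HC2]; auto.
  { intros m Hm. destruct (HG m Hm) as [A [B [D [E _]]]]. auto. }
  destruct (glue_C1 n q p g Dg Hq Hq0 Hq1 Hn) as [HC3 HC4]; auto.
  { intros m Hm. destruct (HG m Hm) as [_ [_ [_ [_ [_ [_ [D [E _]]]]]]]].
    destruct (HGp m Hm) as [_ [_ [_ [_ [A B]]]]]. auto. }
  destruct (finite_max n (Kpiece p q C delta)) as [K [HK HKm]].
  apply (Good_E delta _ (selF n p (dpiece p q Dh)) (selF n q (piece q p g)) (selF n q (dpiece q p Dg)) (INR n * K)).
  unfold Good. split; [|split; [|split; [|split; [|split; [|split; [|split; [|split; [|split]]]]]]]]; auto.
  - rewrite (sel_spec n p _ 1) by (auto; try lia; unfold inP; simpl; pose proof (Hjp 1%nat ltac:(lia)); simpl in *; lra).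
    pose proof (piece_left p q h 1 (Hjp 1%nat ltac:(lia))) as L. simpl in L. rewrite Hp0, Hq0 in L. apply L; destruct (HG 1%nat ltac:(lia)) as [A _]; auto.
  - rewrite (sel_spec n p _ n) by (auto; try lia; unfold inP; pose proof (Hjp n ltac:(lia)); lra).
    rewrite <- Hp1 at 1. rewrite piece_right; [exact Hq1 | apply Hjp; lia | destruct (HG n ltac:(lia)) as [_ [A _]]; exact A].
  - apply glue_inv; auto. intros m Hm. destruct (HG m Hm) as [A [B [_ [_ [E _]]]]].
    destruct (HGp m Hm) as [_ [_ [_ [_ [G0 G1]]]]]. refine (conj A (conj B (conj G0 (conj G1 _)))).
    intros s Hs; apply E; auto.
  - apply glue_inv; auto. intros m Hm. destruct (HG m Hm) as [A [B [_ [_ [_ [E _]]]]]].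
    destruct (HGp m Hm) as [_ [_ [_ [_ [G0 G1]]]]]. refine (conj G0 (conj G1 (conj A (conj B _)))).
    intros s Hs; apply E; auto.
  - apply (holder_glue n p _ K delta); auto; try lra.
    intros m t t' Hm Ht Ht' Htt.
    rewrite (sel_spec n p _ m t), (sel_spec n p _ m t') by auto.
    eapply Rle_trans. apply (piece_hol p q Dh C delta); auto. left; apply Hjq; auto.
    destruct (HG m Hm) as [_ [_ [_ [_ [_ [_ [_ [_ [_ A8]]]]]]]]]; auto.
    destruct (HG m Hm) as [_ [_ [_ [_ [_ [_ [_ [_ [A9 _]]]]]]]]]; auto.
    apply Rmult_le_compat_r. apply Rpower_nonneg. apply HKm; lia.
  - apply Rmult_le_pos; auto. apply pos_INR.
Qed.

Lemma ext_0 n x : ext n x 0%nat = 0.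
Proof. reflexivity. Qed.
Lemma ext_n n x : (1 <= n)%nat -> ext n x n = 1.
Proof. intros H. unfold ext. destruct (Nat.eqb_spec n 0); [lia|]. rewrite Nat.eqb_refl. reflexivity. Qed.
Lemma ext_mid n x i : i <> 0%nat -> i <> n -> ext n x i = x i.
Proof. intros H1 H2. unfold ext. destruct (Nat.eqb_spec i 0); [lia|]. destruct (Nat.eqb_spec i n); [lia|]. reflexivity. Qed.

Lemma dpiece_right p q Dh m : p (m-1)%nat < p m ->
  dpiece p q Dh m (p m) = (q m - q (m-1)%nat) / (p m - p (m-1)%nat) * Dh m 1.
Proof. intros H. unfold dpiece. replace ((p m - p (m-1)%nat) / (p m - p (m-1)%nat)) with 1 by (field; lra). reflexivity. Qed.

Lemma dpiece_left p q Dh m : p (m-1)%nat < p m ->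
  dpiece p q Dh m (p (m-1)%nat) = (q m - q (m-1)%nat) / (p m - p (m-1)%nat) * Dh m 0.
Proof. intros H. unfold dpiece. replace ((p (m-1)%nat - p (m-1)%nat) / (p m - p (m-1)%nat)) with 0 by (field; lra). reflexivity. Qed.

Lemma match_inv k1 j1 k2 j2 A B G1 G2 : k1 <> 0 -> j1 <> 0 -> k2 <> 0 -> j2 <> 0 ->
  k1 / j1 * A = k2 / j2 * B -> G1 * A = 1 -> G2 * B = 1 -> j1 / k1 * G1 = j2 / k2 * G2.
Proof.
  intros h1 h2 h3 h4 H HA HB.
  assert (A <> 0) by (intro E; rewrite E in HA; lra). assert (B <> 0) by (intro E; rewrite E in HB; lra).
  assert (G1 = / A) by (apply (Rmult_eq_reg_r A); auto; rewrite Rinv_l; auto).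
  assert (G2 = / B) by (apply (Rmult_eq_reg_r B); auto; rewrite Rinv_l; auto).
  subst. replace (j1 / k1 * / A) with (/ (k1 / j1 * A)) by (field; auto).
  replace (j2 / k2 * / B) with (/ (k2 / j2 * B)) by (field; auto). rewrite H. reflexivity.
Qed.

Lemma deriv_piece_eq F d p q h Dh m t : deriv_on_I F d ->
  (forall t, inP p m t -> F t = piece p q h m t) -> p (m-1)%nat < p m -> 0 <= p (m-1)%nat -> p m <= 1 ->
  deriv_on_I (h m) (Dh m) -> inP p m t -> d t = dpiece p q Dh m t.
Proof.
  intros HF HFp Hj H0 H1 Hh Ht. apply Rminus_diag_uniq. apply (small_zero _ 2). intros e He.
  assert (Hti : inI t) by (unfold inP, inI in *; lra).
  destruct (HF t Hti e ltac:(lra)) as [d1 [Hd1 Hd1']].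
  destruct (piece_deriv p q h Dh m t Hj Hh Ht e ltac:(lra)) as [d2 [Hd2 Hd2']].
  unfold inP in Ht.
  destruct (near_point (p (m-1)%nat) (p m) t (Rmin d1 d2) Hj Ht) as [y [Hy [Hyt Hyd]]].
  { apply Rmin_glb_lt; auto. }
  assert (Rmin d1 d2 <= d1) by apply Rmin_l. assert (Rmin d1 d2 <= d2) by apply Rmin_r.
  specialize (Hd1' y ltac:(unfold inI; lra) Hyt ltac:(lra)).
  specialize (Hd2' y Hy Hyt ltac:(lra)).
  rewrite (HFp y Hy), (HFp t Ht) in Hd1'.
  set (Q := (piece p q h m y - piece p q h m t) / (y - t)) in *.
  replace (d t - dpiece p q Dh m t) with ((Q - dpiece p q Dh m t) - (Q - d t)) by ring.
  eapply Rle_trans. apply Rabs_triang. rewrite Rabs_Ropp. lra.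
Qed.

Fixpoint wf (c : nat -> R) (i : nat) : R :=
  match i with O => 1 | S i' => wf c i' * c (S i') end.
Fixpoint Wc (c : nat -> R) (i : nat) : R :=
  match i with O => 0 | S i' => Wc c i' + wf c i' end.

Theorem mainTheorem20 (delta : R) (n : nat) (y : nat -> R) (phi : nat -> R -> R) :
  0 < delta < 1 / 2 ->
  (1 <= n)%nat ->
  inD n y ->
  (forall i, (1 <= i <= n)%nat -> E_delta delta (phi i)) ->
  exists x : nat -> R,
    (inD n x /\ exists phibar, E_delta delta phibar /\ glues n phi x y phibar) /\
    (forall x' : nat -> R,
       inD n x' -> (exists phibar, E_delta delta phibar /\ glues n phi x' y phibar) ->
       forall i, (1 <= i <= n - 1)%nat -> x' i = x i).
Proof.
  intros Hdel Hn Hy Hphi.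
  destruct (choice_nat ((R -> R) * (R -> R) * (R -> R) * R)
    (fun i tu => (1 <= i <= n)%nat -> Good delta (phi i) (fst (fst (fst tu))) (snd (fst (fst tu)))
        (snd (fst tu)) (snd tu))) as [F HF].
  { intros i. destruct (le_dec 1 i); [destruct (le_dec i n)|].
    - destruct (E_Good delta (phi i) (Hphi i ltac:(lia))) as [D [g [Dg [C HG]]]].
      exists (D, g, Dg, C). simpl. auto.
    - exists (id, id, id, 0). intros; lia.
    - exists (id, id, id, 0). intros; lia. }
  set (D := fun i => fst (fst (fst (F i)))). set (g := fun i => snd (fst (fst (F i)))).
  set (Dg := fun i => snd (fst (F i))). set (C := fun i => snd (F i)).
  assert (HG : forall m, (1 <= m <= n)%nat -> Good delta (phi m) (D m) (g m) (Dg m) (C m)) by exact HF.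
  clearbody D g Dg C. clear HF.
  assert (HGp : forall m, (1 <= m <= n)%nat -> 0 < D m 0 /\ 0 < D m 1 /\ Dg m 0 * D m 0 = 1 /\
     Dg m 1 * D m 1 = 1 /\ g m 0 = 0 /\ g m 1 = 1) by (intros m Hm; eapply Good_props; apply HG; auto).
  set (q := ext n y).
  assert (Hq : incr n q) by exact Hy.
  assert (Hq0 : q 0%nat = 0) by reflexivity. assert (Hq1 : q n = 1) by (apply ext_n; auto).
  assert (Hjq : forall m, (1 <= m <= n)%nat -> q (m-1)%nat < q m)
    by (intros m Hm; replace m with (S (m-1)) at 2 by lia; apply Hq; lia).
  set (kk := fun i => q i - q (i-1)%nat).
  set (c := fun i => kk (S i) * D (S i) 0 / (kk i * D i 1)).
  assert (Hc : forall i, (1 <= i < n)%nat -> 0 < c i).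
  { intros i Hi. unfold c, kk. destruct (HGp i ltac:(lia)) as [_ [A _]].
    destruct (HGp (S i) ltac:(lia)) as [B _].
    pose proof (Hjq i ltac:(lia)). pose proof (Hjq (S i) ltac:(lia)).
    replace (S i - 1)%nat with i in * by lia.
    apply Rdiv_lt_0_compat; apply Rmult_lt_0_compat; lra. }
  assert (Hwf : forall i, (i < n)%nat -> 0 < wf c i).
  { induction i as [|i IH]; intros Hi; simpl. lra. apply Rmult_lt_0_compat. apply IH; lia. apply Hc; lia. }
  assert (HW : forall i, (i <= n)%nat -> 0 <= Wc c i).
  { induction i as [|i IH]; intros Hi; simpl. lra. pose proof (Hwf i ltac:(lia)). pose proof (IH ltac:(lia)). lra. }
  assert (HWn : 0 < Wc c n).
  { destruct n as [|n']; [lia|]. simpl. pose proof (Hwf n' ltac:(lia)). pose proof (HW n' ltac:(lia)). lra. }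
  set (xx := fun i => Wc c i / Wc c n).
  set (p := ext n xx).
  assert (Hpv : forall i, (i <= n)%nat -> p i = Wc c i / Wc c n).
  { intros i Hi. unfold p. destruct (Nat.eq_dec i 0) as [->|H0].
    - rewrite ext_0. simpl. field. lra.
    - destruct (Nat.eq_dec i n) as [->|H1]. rewrite ext_n by auto. field. lra.
      rewrite ext_mid by auto. reflexivity. }
  assert (Hpj : forall i, (i < n)%nat -> p (S i) - p i = wf c i / Wc c n).
  { intros i Hi. rewrite !Hpv by lia. simpl. field. lra. }
  assert (Hp : incr n p).
  { intros i Hi. pose proof (Hpj i Hi). pose proof (Hwf i Hi).
    assert (0 < wf c i / Wc c n) by (apply Rdiv_lt_0_compat; lra). lra. }
  assert (Hp0 : p 0%nat = 0) by reflexivity. assert (Hp1 : p n = 1) by (apply ext_n; auto).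
  assert (Hjp : forall m, (1 <= m <= n)%nat -> p (m-1)%nat < p m)
    by (intros m Hm; replace m with (S (m-1)) at 2 by lia; apply Hp; lia).
  assert (Hm1 : forall i, (1 <= i < n)%nat -> dpiece p q D i (p i) = dpiece p q D (S i) (p i)).
  { intros i Hi. rewrite dpiece_right by (apply Hjp; lia).
    pose proof (dpiece_left p q D (S i)) as L. replace (S i - 1)%nat with i in L by lia.
    rewrite L by (apply Hp; lia).
    assert (Ep : p i - p (i-1)%nat = wf c (i-1) / Wc c n).
    { destruct i as [|i']; [lia|]. replace (S i' - 1)%nat with i' by lia. apply Hpj; lia. }
    assert (Ew : wf c i = wf c (i-1) * c i).
    { destruct i as [|i']; [lia|]. replace (S i' - 1)%nat with i' by lia. reflexivity. }
    rewrite Ep. rewrite Hpj by lia. rewrite Ew.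
    pose proof (Hwf (i-1)%nat ltac:(lia)). pose proof (Hc i Hi).
    destruct (HGp i ltac:(lia)) as [_ [A _]]. destruct (HGp (S i) ltac:(lia)) as [B _].
    pose proof (Hjq i ltac:(lia)). pose proof (Hjq (S i) ltac:(lia)).
    replace (S i - 1)%nat with i in * by lia.
    assert (Ec : c i = (q (S i) - q i) * D (S i) 0 / ((q i - q (i-1)%nat) * D i 1)).
    { unfold c, kk. replace (S i - 1)%nat with i by lia. reflexivity. }
    rewrite Ec. field. repeat split; try lra. }
  assert (Hm2 : forall i, (1 <= i < n)%nat -> dpiece q p Dg i (q i) = dpiece q p Dg (S i) (q i)).
  { intros i Hi. rewrite dpiece_right by (apply Hjq; lia).
    pose proof (dpiece_left q p Dg (S i)) as L. replace (S i - 1)%nat with i in L by lia.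
    rewrite L by (apply Hq; lia).
    pose proof (Hm1 i Hi) as M. rewrite dpiece_right in M by (apply Hjp; lia).
    pose proof (dpiece_left p q D (S i)) as L2. replace (S i - 1)%nat with i in L2 by lia.
    rewrite L2 in M by (apply Hp; lia).
    pose proof (Hjp i ltac:(lia)). pose proof (Hjp (S i) ltac:(lia)).
    pose proof (Hjq i ltac:(lia)). pose proof (Hjq (S i) ltac:(lia)).
    replace (S i - 1)%nat with i in * by lia.
    destruct (HGp i ltac:(lia)) as [_ [_ [_ [A _]]]]. destruct (HGp (S i) ltac:(lia)) as [_ [_ [B _]]].
    eapply match_inv; [| | | | exact M | exact A | exact B]; lra. }
  exists xx. split.
  - split. exact Hp.
    exists (selF n p (piece p q phi)). split.
    + apply (glue_E delta n p q phi D g Dg C); auto; lra.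
    + intros i Hi t Ht. apply (sel_spec n p (piece p q phi) i t Hp Hi Ht).
      apply piece_match; auto. intros m Hm. destruct (HG m Hm) as [A [B _]]. auto.
  - intros x' Hx' [phib [HE Hgl]] i Hi.
    set (p' := ext n x').
    assert (Hp' : incr n p') by exact Hx'.
    assert (Hp'0 : p' 0%nat = 0) by reflexivity. assert (Hp'1 : p' n = 1) by (apply ext_n; auto).
    assert (Hjp' : forall m, (1 <= m <= n)%nat -> p' (m-1)%nat < p' m)
      by (intros m Hm; replace m with (S (m-1)) at 2 by lia; apply Hp'; lia).
    destruct HE as [_ [d [Hd _]]].
    assert (Hdp : forall m t, (1 <= m <= n)%nat -> inP p' m t -> d t = dpiece p' q D m t).
    { intros m t Hm Ht. apply (deriv_piece_eq phib d p' q phi D m t Hd); auto.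
      - intros t' Ht'. apply (Hgl m Hm t' Ht').
      - rewrite <- Hp'0. apply (incr_le n); auto; lia.
      - rewrite <- Hp'1. apply (incr_le n); auto; lia.
      - destruct (HG m Hm) as [_ [_ [A _]]]. auto. }
    set (j' := fun m => p' m - p' (m-1)%nat).
    assert (Hrec : forall i, (1 <= i < n)%nat -> j' (S i) = c i * j' i).
    { intros i0 Hi0.
      assert (E : dpiece p' q D i0 (p' i0) = dpiece p' q D (S i0) (p' i0)).
      { rewrite <- !Hdp; auto; try lia; unfold inP.
        - replace (S i0 - 1)%nat with i0 by lia. split; [lra|]. left; apply Hp'; lia.
        - split; [|lra]. left; apply Hjp'; lia. }
      rewrite dpiece_right in E by (apply Hjp'; lia).
      pose proof (dpiece_left p' q D (S i0)) as L. replace (S i0 - 1)%nat with i0 in L by lia.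
      rewrite L in E by (apply Hp'; lia).
      pose proof (Hjp' i0 ltac:(lia)). pose proof (Hjp' (S i0) ltac:(lia)).
      pose proof (Hjq i0 ltac:(lia)). pose proof (Hjq (S i0) ltac:(lia)).
      destruct (HGp i0 ltac:(lia)) as [_ [A _]]. destruct (HGp (S i0) ltac:(lia)) as [B _].
      unfold j', c, kk. replace (S i0 - 1)%nat with i0 in * by lia.
      set (J1 := p' i0 - p' (i0 - 1)%nat) in *. set (J2 := p' (S i0) - p' i0) in *.
      set (K1 := q i0 - q (i0 - 1)%nat) in *. set (K2 := q (S i0) - q i0) in *.
      assert (J1 <> 0) by (unfold J1; lra). assert (J2 <> 0) by (unfold J2; lra).
      assert (K1 <> 0) by (unfold K1; lra). assert (K2 <> 0) by (unfold K2; lra).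
      assert (E2 : K2 * D (S i0) 0 = J2 * (K1 / J1 * D i0 1)) by (rewrite E; field; auto).
      rewrite E2. field. split; auto; lra. }
    assert (Hj'w : forall m, (m < n)%nat -> j' (S m) = wf c m * j' 1%nat).
    { induction m as [|m IH]; intros Hm. change (wf c 0) with 1. ring.
      rewrite Hrec by lia. rewrite IH by lia. change (wf c (S m)) with (wf c m * c (S m)). ring. }
    assert (Hp'w : forall m, (m <= n)%nat -> p' m = Wc c m * j' 1%nat).
    { induction m as [|m IH]; intros Hm. change (Wc c 0) with 0. rewrite Hp'0. ring.
      replace (p' (S m)) with (p' m + j' (S m)) by (unfold j'; replace (S m - 1)%nat with m by lia; ring).
      rewrite (Hj'w m) by lia. rewrite IH by lia. change (Wc c (S m)) with (Wc c m + wf c m). ring. }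
    assert (Hj1 : j' 1%nat = 1 / Wc c n).
    { pose proof (Hp'w n (le_n n)) as E. rewrite Hp'1 in E. rewrite E. field. lra. }
    rewrite <- (ext_mid n x' i) by lia. fold p'. rewrite Hp'w by lia. rewrite Hj1.
    unfold xx. field. lra.
Qed.
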